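(* Let $n\ge 4$ be even and let $\ell\ge 3$ be odd with $\gcd(n-1,\ell)\ne 1$. Then $\max(n,\ell)=\binom{n}{2}-\left(\frac{n}{2}+1\right)$, and the graph $\overline{C_3\cup\left(\frac{n-4}{2}\right)P_2\cup K_1}$ is an $(n,\ell)$-extremal graph.
   Context: All graphs are finite and simple; $\overline{G}$ is the complement of $G$, $G\cup H$ is disjoint union, $kH$ is $k$ disjoint copies of $H$, $P_k$ is the path on $k$ vertices, $C_3$ the triangle. Vertex labels lie in $\mathbb{Z}_\ell$. In the neighborhood Lights Out game on $G$, toggling a vertex $v$ adds $1$ (mod $\ell$) to the label of each vertex of the closed neighborhood $N[v]$; the game is won when all labels are $0$. $G$ is $N$-AW if the game can be won from every initial labeling. $\max(n,\ell)$ is the maximum number of edges of an $N$-AW graph on $n$ vertices, and an $(n,\ell)$-extremal graph is an $N$-AW graph on $n$ vertices with $\max(n,\ell)$ edges. *)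

(* Defs.v *)
From mathcomp Require Import all_boot.
Set Implicit Arguments. Unset Strict Implicit. Unset Printing Implicit Defensive.

Definition simple_graph (n : nat) (e : rel 'I_n) : Prop :=
  symmetric e /\ irreflexive e.

Definition num_edges (n : nat) (e : rel 'I_n) : nat :=
  #|[set p : 'I_n * 'I_n | (p.1 < p.2)%N && e p.1 p.2]|.

(* Neighborhood Lights Out over Z_l: labels b, toggle counts x (toggling u
   x u times); vertex v receives one unit from each toggle of u with v in N[u]. *)
Definition N_AW (n l : nat) (e : rel 'I_n) : Prop :=
  forall b : 'I_n -> nat, exists x : 'I_n -> nat,
    forall v : 'I_n, (b v + \sum_(u : 'I_n | (u == v) || e u v) x u) %% l = 0.

Definition is_max_NAW (n l m : nat) : Prop :=
  (exists e : rel 'I_n, [/\ simple_graph e, N_AW l e & num_edges e = m]) /\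
  (forall e : rel 'I_n, simple_graph e -> N_AW l e -> num_edges e <= m).

Definition extremal (n l : nat) (e : rel 'I_n) : Prop :=
  [/\ simple_graph e, N_AW l e &
      forall e' : rel 'I_n, simple_graph e' -> N_AW l e' ->
        num_edges e' <= num_edges e].

(* The graph C_3 u ((n-4)/2) P_2 u K_1 on 'I_n (n even): triangle on {0,1,2},
   edges {3,4},{5,6},...,{n-3,n-2}, and n-1 isolated. *)
Definition H_graph (n : nat) : rel 'I_n := fun u v =>
  (u != v) &&
  (((u < 3) && (v < 3)) ||
   [&& 3 <= u, 3 <= v, u < n.-1, v < n.-1 & (u.-1)./2 == (v.-1)./2]).

Definition G_graph (n : nat) : rel 'I_n := fun u v =>
  (u != v) && ~~ H_graph u v.

(* Main.v *)
Require Import Defs.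
From mathcomp Require Import all_boot all_algebra zify ring.
Set Implicit Arguments. Unset Strict Implicit. Unset Printing Implicit Defensive.

Definition compl n (e : rel 'I_n) : rel 'I_n := fun u v => (u != v) && ~~ e u v.
Definition deg n (e : rel 'I_n) (v : 'I_n) := #|[pred u | e u v]|.

Lemma deg_sum n (e : rel 'I_n) v : deg e v = \sum_(u : 'I_n) (e u v : nat).
Proof. by rewrite /deg -sum1_card big_mkcond; apply: eq_bigr => u _; rewrite inE; case: (e u v). Qed.

Lemma card_pairs n (P : rel 'I_n) :
  #|[set p : 'I_n * 'I_n | P p.1 p.2]| = \sum_(u : 'I_n) \sum_(v : 'I_n) (P u v : nat).
Proof.
rewrite -sum1_card big_mkcond pair_big /=; apply: eq_bigr => p _.
by rewrite inE; case: (P _ _).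
Qed.

Lemma compl_simple n (e : rel 'I_n) : simple_graph e -> simple_graph (compl e).
Proof.
case=> hs hi; split.
- by move=> u v; rewrite /compl eq_sym hs.
- by move=> u; rewrite /compl eqxx.
Qed.

Lemma handshake n (e : rel 'I_n) : simple_graph e ->
  \sum_(v : 'I_n) deg e v = 2 * num_edges e.
Proof.
case=> hs hi.
have E : \sum_(v : 'I_n) deg e v = \sum_(v : 'I_n) \sum_(u : 'I_n) (((u < v) && e u v : nat) + ((v < u) && e u v : nat)).
  apply: eq_bigr => v _; rewrite deg_sum; apply: eq_bigr => u _.
  case: (ltngtP u v) => h /=. all: rewrite ?addn0 ?add0n //.
  have eq : u = v by apply: val_inj.
  by rewrite eq hi.
rewrite E. under eq_bigr => v _ do rewrite big_split. rewrite big_split /= /num_edges (card_pairs (fun u v => (u < v) && e u v)) exchange_big /=.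
rewrite mul2n -addnn; congr (_ + _).
by apply: eq_bigr => v _; apply: eq_bigr => u _; rewrite hs.
Qed.

Lemma edges_compl n (e : rel 'I_n) : simple_graph e ->
  num_edges e + num_edges (compl e) = 'C(n, 2).
Proof.
case=> hs hi.
rewrite /num_edges (card_pairs (fun u v => (u < v) && e u v)) (card_pairs (fun u v => (u < v) && compl e u v)) -big_split /=.
have -> : \sum_(u : 'I_n) (\sum_(v : 'I_n) ((u < v) && e u v : nat) + \sum_(v : 'I_n) ((u < v) && compl e u v : nat))
   = \sum_(u : 'I_n) \sum_(v : 'I_n) ((u < v) : nat).
  apply: eq_bigr => u _; rewrite -big_split; apply: eq_bigr => v _ /=.
  rewrite /compl; case: (ltngtP u v) => h //=.
  have -> : (u != v) by apply/eqP => e1; move: h; rewrite e1 ltnn.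
  by case: (e u v).
rewrite exchange_big /= -bin2_sum big_mkord; apply: eq_bigr => v _.
rewrite -big_mkcond /=.
rewrite -(@big_ord_widen_cond _ 0 addn v n predT (fun _ => 1) (ltnW (ltn_ord v))) /=.
by rewrite sum1_card card_ord.
Qed.

Lemma deg_compl n (e : rel 'I_n) v : simple_graph e ->
  deg e v + deg (compl e) v = n.-1.
Proof.
case=> hs hi.
have h1 := cardC [pred u | e u v]; rewrite card_ord in h1.
have h2 := cardD1 v [predC [pred u | e u v]]; rewrite !inE /= hi /= in h2.
have h3 : #|[predD1 [predC [pred u | e u v]] & v]| = deg (compl e) v.
  by apply: eq_card => u; rewrite !inE /compl.
rewrite -h3; rewrite h2 in h1; move: h1; set X := #|[pred u | e u v]|; set Y := #|[predD1 _ & v]|; rewrite /deg -/X; lia.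
Qed.

Lemma nc_card n (e : rel 'I_n) v :
  #|[pred u | (u == v) || e u v]| + deg (compl e) v = n.
Proof.
have := cardC [pred u | compl e u v]; rewrite card_ord addnC => h.
apply: etrans h; congr (_ + _); apply: eq_card => u; rewrite !inE /compl /=.
by case: (u == v); case: (e u v).
Qed.

Lemma twins_not_NAW n l (e : rel 'I_n) a b : 1 < l -> a != b ->
  (forall u, ((u == a) || e u a) = ((u == b) || e u b)) -> ~ N_AW l e.
Proof.
move=> hl hab htw hN.
have [x hx] := hN (fun v => (v == a) : nat).
have ha := hx a; have hb := hx b.
rewrite eqxx (eq_bigl _ _ htw) in ha.
rewrite eq_sym (negbTE hab) add0n in hb.
move/eqP: ha; rewrite -/(dvdn _ _) => ha.
move/eqP: hb; rewrite -/(dvdn _ _) => hb.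
have : l %| 1 by rewrite -(dvdn_addl 1 hb).
by rewrite dvdn1 => /eqP hl1; move: hl; rewrite hl1.
Qed.

Lemma regular_not_NAW n l (e : rel 'I_n) : simple_graph e ->
  (forall v, deg (compl e) v = 1) -> gcdn n.-1 l != 1 -> 0 < n -> ~ N_AW l e.
Proof.
case=> hs hi hreg hg hn hN.
have [x hx] := hN (fun _ => 1).
have hd : l %| \sum_(v : 'I_n) (1 + \sum_(u : 'I_n | (u == v) || e u v) x u).
  by apply: dvdn_sum => v _; apply/eqP; apply: hx.
rewrite big_split /= sum1_card card_ord in hd.
have E : \sum_(v : 'I_n) \sum_(u : 'I_n | (u == v) || e u v) x u
          = n.-1 * \sum_(u : 'I_n) x u.
  under eq_bigr => v _ do rewrite big_mkcond.
  rewrite exchange_big big_distrr /=; apply: eq_bigr => u _.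
  rewrite -big_mkcond /=.
  have := nc_card e u; rewrite hreg => hc.
  rewrite (eq_bigl [pred v | (v == u) || e v u]); last first.
    by move=> v; rewrite !inE eq_sym hs.
  rewrite sum_nat_const (_ : n.-1 = #|[pred u0 | (u0 == u) || e u0 u]|); last by lia.
  by congr (_ * _); apply: eq_card.
rewrite E in hd.
have g1 : gcdn n.-1 l %| n.
  rewrite -(dvdn_addr _ (dvdn_mulr (\sum_(u : 'I_n) x u) (dvdn_gcdl n.-1 l))).
  rewrite addnC; exact: dvdn_trans (dvdn_gcdr _ _) hd.
have : gcdn n.-1 l %| 1.
  have -> : 1 = n - n.-1 by lia.
  by rewrite dvdn_sub // dvdn_gcdl.
by rewrite dvdn1 (negbTE hg).
Qed.

Lemma excess n (P : pred 'I_n) (f : 'I_n -> nat) k v :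
  (forall u, P u -> 0 < f u) -> \sum_(u | P u) f u <= #|P| + k -> P v -> f v <= k.+1.
Proof.
move=> hpos hs hv.
rewrite (bigD1 v) //= in hs; move: hs.
set S := (X in f v + X <= _) => hs.
have h1 : #|[pred u | P u && (u != v)]| <= S.
  rewrite /S -sum1_card; apply: leq_sum => u /andP [hu _]; exact: hpos.
have h2 := cardD1 v P; rewrite (_ : v \in P = true) /= in h2; last exact: hv.
have h3 : #|[predD1 P & v]| = #|[pred u | P u && (u != v)]|.
  by apply: eq_card => u; rewrite !inE andbC.
rewrite h2 h3 in hs; move: hs h1; clearbody S; set c := #|_|; lia.
Qed.

Lemma closed_eq n (e : rel 'I_n) u v : ((u == v) || e u v) = ~~ compl e u v.
Proof. by rewrite /compl; case: (u == v); case: (e u v). Qed.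

Lemma deg0 n (e : rel 'I_n) w : deg (compl e) w = 0 -> forall u, (u == w) || e u w.
Proof.
move=> h u; have := card0_eq h u; rewrite !inE closed_eq => ->; done.
Qed.

Lemma upper n l (e : rel 'I_n) : 4 <= n -> ~~ odd n -> 1 < l -> gcdn n.-1 l != 1 ->
  simple_graph e -> N_AW l e -> n./2 < num_edges (compl e).
Proof.
move=> hn hodd hl hg hse hN; rewrite ltnNge; apply/negP => hc.
have [hs hi] := hse.
have hcs := compl_simple hse; have [chs chi] := hcs.
have hsum := handshake hcs.
set d := deg (compl e) in hsum.
have hsumn : \sum_(v : 'I_n) d v <= n by rewrite hsum; lia.
have cardn : #|'I_n| = n by rewrite card_ord.
case: (boolP [exists w, d w == 0]) => [/existsP [w /eqP hw]|]; last first.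
  rewrite negb_exists => /forallP hpos.
  apply: (regular_not_NAW hse) hN => //; last by lia.
  move=> v; have hp : forall u : 'I_n, predT u -> 0 < d u.
    by move=> u _; have := hpos u; rewrite lt0n.
  have := excess (k := 0) hp; rewrite cardn addn0 => /(_ v hsumn isT).
  by have := hp v isT; rewrite /d; lia.
have hwu := deg0 hw.
case: (boolP [exists w', (w' != w) && (d w' == 0)]) => [/existsP [w' /andP [hww' /eqP hw']]|].
  apply: (twins_not_NAW hl hww') hN => u.
  by rewrite hwu (deg0 hw').
rewrite negb_exists => /forallP hpos.
have hp : forall u : 'I_n, (u != w) -> 0 < d u.
  by move=> u hu; have := hpos u; rewrite hu lt0n.
have hcw : #|[pred u : 'I_n | u != w]| = n.-1.
  by have := cardC1 w; rewrite card_ord => <-; apply: eq_card.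
have hsw : \sum_(v : 'I_n) d v = \sum_(u | u != w) d u.
  by rewrite (bigD1 w) //= hw add0n.
have hle : \sum_(u | u != w) d u <= #|[pred u : 'I_n | u != w]| + 1 by rewrite -hsw hcw; lia.
have [z /andP [hzw hz2]] : exists z, (z != w) && (1 < d z).
  apply/existsP; apply: contraT; rewrite negb_exists => /forallP hall.
  have h1 : \sum_(u | u != w) d u = \sum_(u | u != w) 1.
    apply: eq_bigr => u hu; have := hall u; rewrite hu /=; have := hp u hu; lia.
  move: hsum; rewrite hsw h1 sum1_card.
  have -> : #|[pred u | u != w]| = n.-1 by rewrite -hcw.
  by move: hodd; lia.
have hz2' : d z <= 2 by apply: (excess hp hle).
have hle2 : \sum_(u | (u != w) && (u != z)) d u <= #|[pred u : 'I_n | (u != w) && (u != z)]| + 0.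
  have h2 := cardD1 z [pred u : 'I_n | u != w]; rewrite inE hzw /= in h2.
  have h3 : #|[predD1 [pred u : 'I_n | u != w] & z]| = #|[pred u : 'I_n | (u != w) && (u != z)]|.
    by apply: eq_card => u; rewrite !inE andbC.
  move: hle; rewrite (bigD1 z) //= h2 h3 => hh.
  have hh' : d z + \sum_(u | (u != w) && (u != z)) d u <= 1 + #|[pred u : 'I_n | (u != w) && (u != z)]| + 1 := hh.
  lia.
have hp2 : forall u : 'I_n, (u != w) && (u != z) -> 0 < d u.
  by move=> u /andP [hu _]; exact: hp.
have hone : forall y, y != w -> y != z -> d y = 1.
  move=> y hyw hyz; have := excess hp2 hle2 (v := y); rewrite hyw hyz => /(_ isT).
  by have := hp y hyw; lia.
have : 1 < #|[pred u | compl e u z]| by [].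
move/card_gt1P => [a [b [ha hb hab]]].
have hnot : forall c, c \in [pred u | compl e u z] -> d c = 1 /\ c != z.
  move=> c; rewrite inE => hcz.
  have hcz' : c != z by apply/eqP => ecz; move: hcz; rewrite ecz chi.
  have hcw2 : c != w.
    apply/eqP => ecw; move: hcz; rewrite ecw /compl.
    have := hwu z; rewrite (negbTE hzw) /= => ezw.
    by rewrite hs ezw andbF.
  by split => //; apply: hone.
have hnb : forall c, c \in [pred u | compl e u z] -> forall u, ((u == c) || e u c) = (u != z).
  move=> c hcin u; have [hdc hcz] := hnot c hcin.
  have hzc : z \in [pred u | compl e u c] by rewrite inE chs; move: hcin; rewrite inE.
  have hle1 : #|[pred u | compl e u c]| <= 1 by move: hdc; rewrite /d /deg => ->.
  have := (card_le1P hle1) z hzc u; rewrite inE => hh.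
  by rewrite closed_eq hh.
apply: (twins_not_NAW hl hab) hN => u.
by rewrite (hnb a ha) (hnb b hb).
Qed.

Lemma H_simple n : simple_graph (@H_graph n).
Proof.
split.
- move=> u v; rewrite /H_graph eq_sym; congr (_ && _).
  by rewrite andbC; congr (_ || _); lia.
- by move=> u; rewrite /H_graph eqxx.
Qed.

Lemma H_tri n (u v : 'I_n) : v < 3 -> H_graph u v = (u < 3) && (u != v).
Proof.
move=> hv; rewrite /H_graph andbC; congr (_ && _). rewrite hv andbT.
apply/idP/idP; [case/orP => //; lia | by move=> ->].
Qed.

Lemma H_last n (u v : 'I_n) : 4 <= n -> nat_of_ord v = n.-1 -> H_graph u v = false.
Proof. move=> hn hv; rewrite /H_graph -val_eqE; apply/negbTE; lia. Qed.

Lemma H_mid n (v : 'I_n) : 4 <= n -> ~~ odd n -> 3 <= v < n.-1 ->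
  exists p : 'I_n, (3 <= p < n.-1) /\ forall u, H_graph u v = (u == p).
Proof.
move=> hn ho hv.
pose pv := if odd v then v.+1 else v.-1.
have hpv : (odd v && (pv == v.+1)) || (~~ odd v && (pv == v.-1)).
  by rewrite /pv; case: (odd v); rewrite eqxx.
have hp : pv < n by lia.
exists (Ordinal hp); split; first by rewrite /=; lia.
move=> u; rewrite /H_graph -val_eqE /=.
apply/idP/idP.
  move=> /andP [h1 /orP [/andP [_ h2]|/and5P [h2 h3 h4 h5 /eqP h6]]]; first lia.
  apply/eqP; apply: val_inj => /=; case/orP: hpv => /andP [hov /eqP hpe]; lia.
move=> /eqP hu; have hu2 : nat_of_ord u = pv by rewrite hu. apply/andP; split; first lia.
apply/orP; right; apply/and5P; split; try lia.
Qed.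

Lemma card_nat n (P : pred nat) : #|[pred u : 'I_n | P u]| = \sum_(0 <= k < n) P k.
Proof.
rewrite big_mkord -sum1_card big_mkcond; apply: eq_bigr => u _; rewrite inE.
by case: (P u).
Qed.

Lemma card_lt3 n : 3 <= n -> #|[pred u : 'I_n | u < 3]| = 3.
Proof.
move=> hn; rewrite (card_nat n (fun k => k < 3)) (big_cat_nat _ (n := 3)) //=.
have -> : \sum_(3 <= k < n) (k < 3 : nat) = 0.
  by rewrite big_nat_cond big1 // => k /andP [/andP [hk _] _]; rewrite ltnNge hk.
by rewrite addn0 unlock.
Qed.

Definition fH n k := if k < 3 then 2 else if k < n.-1 then 1 else 0.

Lemma degH n (v : 'I_n) : 4 <= n -> ~~ odd n -> deg (@H_graph n) v = fH n v.
Proof.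
move=> hn ho; rewrite /fH /deg.
case: ifP => h3.
  have h := cardD1 v [pred u : 'I_n | u < 3].
  rewrite card_lt3 in h; last by lia.
  rewrite inE /= h3 /= add1n in h; have : #|[predD1 [pred u : 'I_n | u < 3] & v]| = 2 by case: h.
  move=> <-; apply: eq_card => u; rewrite !inE H_tri // andbC.
  done.
case: ifP => h4.
  have [p [_ hp]] := H_mid hn ho (v := v) (ltac:(lia)).
  rewrite -(card1 p); apply: eq_card => u; rewrite !inE hp.
  done.
rewrite -(card0 'I_n); apply: eq_card => u; rewrite !inE H_last //.
have := ltn_ord v; lia.
Qed.

Lemma sum_degH n : 4 <= n -> ~~ odd n -> \sum_(v : 'I_n) deg (@H_graph n) v = n + 2.
Proof.
move=> hn ho.
rewrite (eq_bigr (fun v : 'I_n => fH n v)); last by move=> v _; apply: degH.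
rewrite -(big_mkord xpredT (fH n)) (big_cat_nat _ (n := 3)) //=; last by lia.
rewrite [X in _ + X](big_cat_nat _ (n := n.-1)) //=; [|lia|lia].
rewrite (eq_big_nat _ _ (F2 := fun _ => 2)); last by move=> k hk; rewrite /fH; case: ifP => //; lia.
rewrite [X in _ + (X + _)](eq_big_nat _ _ (F2 := fun _ => 1)); last first.
  by move=> k hk; rewrite /fH; case: ifP => ?; [lia|case: ifP => //; lia].
rewrite [X in _ + (_ + X)](eq_big_nat _ _ (F2 := fun _ => 0)); last first.
  by move=> k hk; rewrite /fH; case: ifP => ?; [lia|case: ifP => //; lia].
rewrite !sum_nat_const_nat; lia.
Qed.

Lemma edges_H n : 4 <= n -> ~~ odd n -> num_edges (@H_graph n) = n./2 + 1.
Proof.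
move=> hn ho; have := handshake (H_simple n); rewrite sum_degH //; lia.
Qed.
Section RingPart.
Import GRing.Theory.
Local Open Scope ring_scope.

Lemma modZ (l k : nat) : (1 < l)%N -> (k%:R : 'Z_l) = 0 -> (k %% l = 0)%N.
Proof.
move=> hl; rewrite Zp_nat => /(congr1 val) /=; rewrite Zp_cast //.
Qed.

Lemma half2 (l : nat) : (1 < l)%N -> odd l -> (((l.+1)./2)%:R : 'Z_l) *+ 2 = 1.
Proof.
move=> hl ho; rewrite -mulrnA.
have -> : ((l.+1)./2 * 2 = l + 1)%N by lia.
by rewrite natrD pchar_Zp // add0r.
Qed.

Lemma sum3 (n l : nat) (c : 'Z_l) : (3 <= n)%N -> \sum_(u : 'I_n | (u < 3)%N) c = c *+ 3.
Proof. move=> hn; by rewrite sumr_const card_lt3. Qed.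

Lemma G_NAW (n l : nat) : (4 <= n)%N -> ~~ odd n -> (1 < l)%N -> odd l -> N_AW l (@G_graph n).
Proof.
move=> hn ho hl hol b.
have hwlt : (n.-1 < n)%N by lia.
pose w := Ordinal hwlt.
pose bz := fun v : 'I_n => ((b v)%:R : 'Z_l).
pose h : 'Z_l := ((l.+1)./2)%:R.
have h2 : h *+ 2 = 1 by apply: half2.
pose S := - bz w.
pose B3 := \sum_(u : 'I_n | (u < 3)%N) bz u.
pose T := h * (S *+ 3 + B3).
pose xm := fun u : 'I_n => S + \sum_(y : 'I_n | H_graph y u) bz y.
pose M := \sum_(u : 'I_n | ~~ (u < 3)%N && (u < n.-1)%N) xm u.
pose xz := fun u : 'I_n => if (u < 3)%N then T - S - bz u
                           else if (u < n.-1)%N then xm u else S - T - M.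
have hT3 : \sum_(u : 'I_n | (u < 3)%N) xz u = T.
  rewrite (eq_bigr (fun u => T - S - bz u)); last by move=> u hu; rewrite /xz hu.
  rewrite sumrB sum3; last by lia.
  have e2 : T *+ 2 = S *+ 3 + B3 by rewrite /T -mulrnAl h2 mul1r.
  apply/eqP; rewrite -subr_eq0.
  have -> : (T - S) *+ 3 - B3 - T = T *+ 2 - (S *+ 3 + B3) by rewrite /B3; ring.
  by rewrite e2 subrr.
have hX : \sum_(u : 'I_n) xz u = S.
  rewrite (bigID (fun u : 'I_n => (u < 3)%N)) /= hT3.
  rewrite [X in _ + X](bigID (fun u : 'I_n => (u < n.-1)%N)) /=.
  rewrite (eq_bigr xm); last by move=> u /andP [/negbTE h3 h4]; rewrite /xz h3 h4.
  rewrite -/M (big_pred1 w); last first.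
    move=> u; rewrite /= -val_eqE /=; have := ltn_ord u; lia.
  rewrite /xz /= ifF; last by lia.
  rewrite ifF; last by lia.
  ring.
exists (fun u => nat_of_ord (xz u)) => v.
apply: modZ => //.
rewrite natrD natr_sum.
under eq_bigr do rewrite natr_Zp.
rewrite -/(bz v).
have hpred : forall u, ((u == v) || G_graph u v) = ~~ H_graph u v.
  move=> u; rewrite /G_graph; case: (eqVneq u v) => [->|] //=.
  by rewrite /H_graph eqxx.
rewrite (eq_bigl _ _ hpred).
have hsplit : \sum_(u : 'I_n | ~~ H_graph u v) xz u = S - \sum_(u : 'I_n | H_graph u v) xz u.
  by rewrite -hX (bigID (fun u => H_graph u v) predT) /= addrC addrK.
rewrite hsplit.
case: (boolP (v < 3)%N) => hv3.
  rewrite (eq_bigl (fun u : 'I_n => (u < 3)%N && (u != v))); last by move=> u; rewrite H_tri.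
  have := hT3; rewrite (bigD1 v) //= => hT.
  have -> : \sum_(u : 'I_n | (u < 3)%N && (u != v)) xz u = T - xz v by rewrite -hT addrC addrK.
  rewrite /xz hv3; ring.
case: (boolP (v < n.-1)%N) => hvm.
  have [p [hpm hp]] := H_mid hn ho (v := v) (ltac:(lia)).
  rewrite (big_pred1 p) //.
  have [q [_ hq]] := H_mid hn ho (v := p) hpm.
  have hqv : q = v.
    have := hq v; rewrite (proj1 (H_simple n)) hp eqxx => /esym /eqP ->; done.
  rewrite /xz ifF; last by lia.
  rewrite ifT; last by lia.
  rewrite /xm (big_pred1 v); last by move=> y; rewrite hq hqv.
  ring.
rewrite big_pred0; last by move=> u; rewrite H_last //; have := ltn_ord v; lia.
have -> : v = w by apply: val_inj => /=; have := ltn_ord v; lia.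
rewrite /S; ring.
Qed.
End RingPart.

Theorem proposition4p4 (n l : nat) :
  4 <= n -> ~~ odd n -> 3 <= l -> odd l -> gcdn n.-1 l != 1 ->
  is_max_NAW n l ('C(n, 2) - (n./2 + 1)) /\ extremal l (@G_graph n).
Proof.
move=> hn ho hl hol hg.
have hl1 : 1 < l by lia.
have hGs : simple_graph (@G_graph n) := compl_simple (H_simple n).
have hGN := G_NAW hn ho hl1 hol.
have hGE : num_edges (@G_graph n) = 'C(n, 2) - (n./2 + 1).
  change (num_edges (@G_graph n)) with (num_edges (compl (@H_graph n))).
  have := edges_compl (H_simple n); rewrite edges_H //; lia.
have hup : forall e : rel 'I_n, simple_graph e -> N_AW l e ->
    num_edges e <= 'C(n, 2) - (n./2 + 1).
  move=> e hs hN; have := upper hn ho hl1 hg hs hN; have := edges_compl hs; lia.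
split.
  split; last exact: hup.
  by exists (@G_graph n); split.
split => // e' hs hN; rewrite hGE; exact: hup.
Qed.
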